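(* Let $n\ge1$. Let $\lambda_i^{(n+1)}$, for $0\le i\le\binom{n+1}{2}$, be the unique integers with $$[n+1]!=\sum_{s=1}^n\left[n\atop s\right][2]^s+\lambda_0^{(n+1)}+\sum_{l=1}^{\binom{n+1}{2}}\lambda_l^{(n+1)}(q^l+q^{-l}).$$ For $i\ge0$, let $\mu_i^{(n+1)}$ be the coefficient of $q^i$ in $[n+1]!$; this is $0$ for $i>\binom{n+1}{2}$. Then: (a) For $0\le i\le n$, $$\mu_i^{(n+1)}=\lambda_i^{(n+1)}+\sum_{\substack{i\le s\le n\\ s\equiv i \bmod 2}}\left[n\atop s\right]\binom{s}{\frac{s+i}{2}}.$$ For $n+1\le i\le\binom{n+1}{2}$, $\mu_i^{(n+1)}=\lambda_i^{(n+1)}$. (b) Let $I=\lfloor\frac{n+1}{2}\rfloor$. If $I$ is odd, then for every even $i$; and if $I$ is even, then for every odd $i$: $$\lambda_i^{(n+1)}=-\sum_{\substack{i\le s\le n\\ s\equiv i\bmod 2}}\left[n\atop s\right]\binom{s}{\frac{s+i}{2}}\quad\text{if }0\le i\le n,$$ and $\lambda_i^{(n+1)}=0$ if $n+1\le i\le\binom{n+1}{2}$. (c) For all $i\ge0$, $$\mu_i^{(n+2)}=\sum_{j=0}^{n+1}\mu^{(n+1)}_{|i-(n+1)+2j|}.$$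
   Context: For an integer $k\ge1$, the quantum integer is the Laurent polynomial $$[k]=\frac{q^k-q^{-k}}{q-q^{-1}}=q^{k-1}+q^{k-3}+\cdots+q^{1-k}\in\mathbb{Z}[q,q^{-1}],$$ and $[m]!=[m][m-1]\cdots[1]$. The unsigned Stirling number of the first kind $\left[n\atop s\right]$ is the number of permutations of $\{1,\dots,n\}$ having exactly $s$ cycles in their disjoint-cycle decomposition, fixed points included. *)

(* Defs.v *)
From HB Require Import structures.
From mathcomp Require Import all_boot all_order all_algebra all_fingroup.
Set Implicit Arguments. Unset Strict Implicit. Unset Printing Implicit Defensive.
Import Order.TTheory GRing.Theory Num.Theory.
Local Open Scope ring_scope.

(* Laurent polynomials in q with integer coefficients, represented as a pair
   (p, a) standing for p(q) * q^(-a), with p : {poly int}.  Equality of Laurent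
   polynomials is equality of all coefficients (lcoef). *)
Definition laurent := ({poly int} * nat)%type.

Definition lcoef (L : laurent) (i : int) : int :=
  match (i + (L.2)%:Z)%R with
  | Posz k => (L.1)`_k
  | Negz _ => 0
  end.

Definition lzero : laurent := (0, 0%N).
Definition lone : laurent := (1, 0%N).
Definition ladd (L M : laurent) : laurent :=
  (L.1 * 'X^(M.2) + M.1 * 'X^(L.2), (L.2 + M.2)%N).
Definition lmul (L M : laurent) : laurent := (L.1 * M.1, (L.2 + M.2)%N).
Definition lscale (c : int) (L : laurent) : laurent := (c *: L.1, L.2).
Definition lexp (L : laurent) (s : nat) : laurent := iter s (lmul L) lone.

Definition lq (k : int) : laurent :=
  match k with
  | Posz a => ('X^a, 0%N)
  | Negz b => (1, b.+1)
  end.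

(* quantum integer [k] = q^(k-1) + q^(k-3) + ... + q^(1-k), k >= 1 *)
Definition qint (k : nat) : laurent := (\sum_(j < k) 'X^(2 * j), k.-1).

Definition qfact (m : nat) : laurent := \big[lmul/lone]_(1 <= k < m.+1) qint k.

(* unsigned Stirling number of the first kind: permutations of {1..n}
   (here 'I_n) with exactly s cycles, fixed points included *)
Definition stirling1 (n s : nat) : nat :=
  #|[set sigma : 'S_n | #|porbits sigma| == s]|.

Definition mu (m i : nat) : int := lcoef (qfact m) (Posz i).

Definition lambda_rhs (n : nat) (lam : nat -> int) : laurent :=
  ladd (\big[ladd/lzero]_(1 <= s < n.+1) lscale (stirling1 n s)%:Z (lexp (qint 2) s))
   (ladd (lscale (lam 0%N) lone)
     (\big[ladd/lzero]_(1 <= l < 'C(n.+1, 2).+1)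
        lscale (lam l) (ladd (lq (Posz l)) (lq (- Posz l))))).

(* Main.v *)
Require Import Defs.
From HB Require Import structures.
From mathcomp Require Import all_boot all_order all_algebra all_fingroup.
From mathcomp Require Import zify ring.
Import Order.TTheory GRing.Theory Num.Theory.
Local Open Scope ring_scope.

Definition cz (p : {poly int}) (z : int) : int :=
  if (0 <= z) then p`_(absz z) else 0.

Lemma lcoefE L i : lcoef L i = cz L.1 (i + (L.2)%:Z).
Proof. by rewrite /lcoef /cz; case: (i + _). Qed.

Lemma cz_add p q z : cz (p + q) z = cz p z + cz q z.
Proof. by rewrite /cz; case: ifP; rewrite ?coefD ?addr0. Qed.

Lemma cz_scale c p z : cz (c *: p) z = c * cz p z.
Proof. by rewrite /cz; case: ifP; rewrite ?coefZ ?mulr0. Qed.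

Lemma cz_sum (I : Type) (r : seq I) (P : pred I) (F : I -> {poly int}) z :
  cz (\sum_(i <- r | P i) F i) z = \sum_(i <- r | P i) cz (F i) z.
Proof.
apply: (big_morph (fun p => cz p z)); first by move=> ??; exact: cz_add.
by rewrite /cz coef0; case: ifP.
Qed.

Lemma cz_mulXn p m z : cz (p * 'X^m) z = cz p (z - m%:Z).
Proof.
rewrite /cz; case: (lerP 0 z) => hz.
  rewrite coefMXn; case: ltnP => hm.
    case: ifP => //; lia.
  have -> : (0 <= z - m%:Z) by lia.
  by congr (_`_ _); lia.
by case: ifP => //; lia.
Qed.

Lemma cz_one z : cz 1 z = (z == 0)%:R.
Proof. by rewrite /cz coef1; case: ifP; case: (z == 0) /eqP => //; lia. Qed.
Lemma lcoef_add L M i : lcoef (ladd L M) i = lcoef L i + lcoef M i.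
Proof.
rewrite !lcoefE /ladd /= cz_add !cz_mulXn; congr (cz _ _ + cz _ _); lia.
Qed.

Lemma lcoef_scale c L i : lcoef (lscale c L) i = c * lcoef L i.
Proof. by rewrite !lcoefE cz_scale. Qed.

Lemma lcoef_zero i : lcoef lzero i = 0.
Proof. by rewrite lcoefE /cz coef0; case: ifP. Qed.

Lemma lcoef_one i : lcoef lone i = (i == 0)%:R.
Proof. by rewrite lcoefE cz_one addr0. Qed.

Lemma lcoef_big (I : Type) (r : seq I) (P : pred I) (F : I -> laurent) i :
  lcoef (\big[ladd/lzero]_(k <- r | P k) F k) i = \sum_(k <- r | P k) lcoef (F k) i.
Proof.
apply: (big_morph (fun L => lcoef L i)); first by move=> ??; exact: lcoef_add.
exact: lcoef_zero.
Qed.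

Lemma lcoef_lqP (l i : nat) : lcoef (lq (Posz l)) (Posz i) = (i == l)%:R.
Proof.
rewrite lcoefE /= /cz coefXn addr0 /=. by [].
Qed.

Lemma lcoef_lqN (l i : nat) : (0 < l)%N -> lcoef (lq (- Posz l)) (Posz i) = 0.
Proof.
case: l => // l _. have -> : - Posz l.+1 = Negz l by [].
rewrite lcoefE /= cz_one; case: eqP => //; lia.
Qed.
Lemma qint2E : (qint 2).1 = 1 + 'X^2.
Proof. rewrite /qint /= big_ord_recl big_ord1 /= expr0 /bump /=.
by []. Qed.

Lemma lexp2E s : lexp (qint 2) s = ((1 + 'X^2) ^+ s, s).
Proof.
elim: s => [|s IH].
  by rewrite /lexp /= /lone expr0.
change (lexp (qint 2) s.+1) with (lmul (qint 2) (lexp (qint 2) s)).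
rewrite IH /lmul qint2E /=.
by rewrite [in RHS]exprS add1n.
Qed.

Lemma coef_q2 s k : ((1 + 'X^2 : {poly int}) ^+ s)`_k = if odd k then 0 else ('C(s, k./2))%:R.
Proof.
elim: s k => [|s IH] k.
  rewrite expr0 coef1; case: k => [//|[//|k]] /=.
  by case: odd => //=; rewrite bin0n.
rewrite exprS mulrDl mul1r coefD coefXnM IH.
case: k => [|[|k]] /=; rewrite ?bin0 //.
rewrite IH subn2 /=; case: odd => //=.
by rewrite binS natrD addrC.
Qed.

Lemma lcoef_q2 s (i : nat) : lcoef (lexp (qint 2) s) (Posz i) =
  if odd s == odd i then ('C(s, (s + i)./2))%:R else 0.
Proof.
rewrite lexp2E lcoefE /cz /= coef_q2 addnC oddD.
by case: (odd s); case: (odd i).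
Qed.
Lemma qfactE m : qfact m =
  (\prod_(1 <= k < m.+1) (qint k).1, (\sum_(1 <= k < m.+1) (qint k).2)%N).
Proof.
rewrite [qfact m]surjective_pairing; congr pair.
  by apply: (big_morph fst) => //.
by apply: (big_morph snd) => //.
Qed.

Lemma qfactS m : qfact m.+1 = lmul (qfact m) (qint m.+1).
Proof. by rewrite !qfactE /lmul /= big_nat_recr //= [in LHS](big_nat_recr m.+1) /=. Qed.

Lemma lcoef_mulq L k i : lcoef (lmul L (qint k.+1)) i =
  \sum_(j < k.+1) lcoef L (i + k%:Z - (2 * j)%N%:Z).
Proof.
rewrite lcoefE /lmul /= mulr_sumr cz_sum; apply: eq_bigr => j _.
rewrite cz_mulXn lcoefE; congr (cz _ _); lia.
Qed.
Lemma qfact0 : qfact 0 = lone.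
Proof. by rewrite /qfact big_geq. Qed.

Lemma qfact_rec m i : lcoef (qfact m.+1) i =
  \sum_(j < m.+1) lcoef (qfact m) (i + m%:Z - (2 * j)%N%:Z).
Proof. by rewrite qfactS lcoef_mulq. Qed.

Lemma qfact_sym m i : lcoef (qfact m) (- i) = lcoef (qfact m) i.
Proof.
elim: m i => [|m IH] i.
  by rewrite qfact0 !lcoef_one oppr_eq0.
rewrite !qfact_rec (reindex_inj rev_ord_inj) /=.
apply: eq_bigr => j _; rewrite -IH; congr lcoef.
have := ltn_ord j; lia.
Qed.

Lemma qfact2S m : (qfact m.+1).2 = ((qfact m).2 + m)%N.
Proof. by rewrite qfactS. Qed.

Lemma qfact_par m i : odd (absz (i + ((qfact m).2)%:Z)) -> lcoef (qfact m) i = 0.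
Proof.
elim: m i => [|m IH] i.
  rewrite qfact0 lcoef_one /=; case: eqP => //; lia.
move=> h; rewrite qfact_rec big1 // => j _; apply: IH.
move: h; rewrite qfact2S; lia.
Qed.

Lemma qfact2_odd m : odd (qfact m).2 = odd (m./2).
Proof.
elim: m => [|m IH]; first by rewrite qfact0.
rewrite qfact2S oddD IH; lia.
Qed.
Lemma stirling1_n0 n : (0 < n)%N -> stirling1 n 0 = 0%N.
Proof.
case: n => // n _; rewrite /stirling1; apply/eqP; rewrite cards_eq0; apply/eqP.
apply/setP => s; rewrite !inE; apply/negbTE; rewrite cards_eq0.
apply/set0Pn; exists (porbit s ord0); exact: imset_f.
Qed.

Lemma G0 s i : (s < i)%N ->
  (if odd s == odd i then ('C(s, (s + i)./2))%:R else 0 : int) = 0.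
Proof. by move=> h; case: ifP => // hp; rewrite bin_small //; lia. Qed.

Lemma S_eq n i : (0 < n)%N ->
  \sum_(1 <= s < n.+1) (stirling1 n s)%:Z * (if odd s == odd i then ('C(s, (s + i)./2))%:R else 0 : int)
  = \sum_(i <= s < n.+1 | odd s == odd i) (stirling1 n s)%:Z * ('C(s, (s + i)./2))%:Z.
Proof.
move=> n0; rewrite (@big_nat_widenl _ _ _ i 0) // big_mkcond /=.
rewrite [RHS]big_ltn // stirling1_n0 // mul0r if_same add0r.
apply: eq_big_nat => s _.
case: (leqP i s) => h; rewrite ?andbT ?andbF.
  by case: ifP => _; rewrite ?mulr0 // natz.
by rewrite G0 // mulr0.
Qed.

Lemma big_delta (a b i : nat) (F : nat -> int) :
  \sum_(a <= l < b) F l * (i == l)%:R = if (a <= i < b)%N then F i else 0.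
Proof.
rewrite -(@big_nat1_eq _ 0 +%R) big_mkcond /=; apply: eq_bigr => l _.
by rewrite eq_sym; case: eqP => _; rewrite ?mulr1 ?mulr0.
Qed.

Lemma rhs_coef n lam (i : nat) : (0 < n)%N -> (i <= 'C(n.+1, 2))%N ->
  lcoef (lambda_rhs n lam) (Posz i) =
  \sum_(i <= s < n.+1 | odd s == odd i) (stirling1 n s)%:Z * ('C(s, (s + i)./2))%:Z
  + lam i.
Proof.
move=> n0 hi; rewrite /lambda_rhs !lcoef_add !lcoef_big lcoef_scale lcoef_one.
under eq_bigr => s _ do rewrite lcoef_scale lcoef_q2.
rewrite S_eq //; congr (_ + _).
under eq_bigr => l _ do rewrite lcoef_scale.
rewrite (@eq_big_nat _ _ _ _ _ _ (fun l => lam l * (i == l)%:R)); last first.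
  by move=> l /andP[hl _]; rewrite lcoef_add lcoef_lqP lcoef_lqN // addr0.
rewrite big_delta; case: i hi => [|i] hi /=.
  by rewrite mulr1 addr0.
by rewrite mulr0 add0r ltnS hi.
Qed.

Lemma qfact_abs m z : lcoef (qfact m) (Posz (absz z)) = lcoef (qfact m) z.
Proof.
case: (lerP 0 z) => h.
  by have -> : Posz (absz z) = z by lia.
by rewrite -qfact_sym; congr lcoef; lia.
Qed.

Theorem proposition4 (n : nat) (lam : nat -> int) :
  (0 < n)%N ->
  (forall i : int, lcoef (qfact n.+1) i = lcoef (lambda_rhs n lam) i) ->
  (* (a) *)
  ((forall i : nat, (i <= n)%N ->
      mu n.+1 i = lam i + \sum_(i <= s < n.+1 | odd s == odd i)
                             (stirling1 n s)%:Z * ('C(s, (s + i)./2))%:Z)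
   /\ (forall i : nat, (n.+1 <= i <= 'C(n.+1, 2))%N -> mu n.+1 i = lam i))
  /\
  (* (b) *)
  (forall i : nat, odd i != odd (n.+1)./2 ->
     ((i <= n)%N -> lam i = - \sum_(i <= s < n.+1 | odd s == odd i)
                             (stirling1 n s)%:Z * ('C(s, (s + i)./2))%:Z)
     /\ ((n.+1 <= i <= 'C(n.+1, 2))%N -> lam i = 0))
  /\
  (* (c) *)
  (forall i : nat,
     mu n.+2 i = \sum_(j < n.+2) mu n.+1 (absz (Posz i - Posz n.+1 + Posz (2 * j)))).
Proof.
move=> n0 H.
have hC : (n <= 'C(n.+1, 2))%N.
  by rewrite binS bin1 leq_addl.
have muE : forall i : nat, (i <= 'C(n.+1, 2))%N -> mu n.+1 i =
   \sum_(i <= s < n.+1 | odd s == odd i) (stirling1 n s)%:Z * ('C(s, (s + i)./2))%:Z + lam i.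
  by move=> i hi; rewrite /mu H rhs_coef.
have big0 : forall i : nat, (n.+1 <= i)%N ->
   \sum_(i <= s < n.+1 | odd s == odd i) (stirling1 n s)%:Z * ('C(s, (s + i)./2))%:Z = 0.
  by move=> i hi; apply: big_geq.
have partA : (forall i : nat, (i <= n)%N ->
      mu n.+1 i = lam i + \sum_(i <= s < n.+1 | odd s == odd i)
                             (stirling1 n s)%:Z * ('C(s, (s + i)./2))%:Z)
   /\ (forall i : nat, (n.+1 <= i <= 'C(n.+1, 2))%N -> mu n.+1 i = lam i).
  split.
    by move=> i hi; rewrite muE ?(leq_trans hi hC) // addrC.
  by move=> i /andP[h1 h2]; rewrite muE // big0 // add0r.
split => //; split.
  move=> i hi.
  have mu0 : mu n.+1 i = 0.
    rewrite /mu qfact_par //; move: hi; have := qfact2_odd n.+1; lia.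
  split.
    move=> hin; have := proj1 partA i hin; rewrite mu0 => /eqP.
    by rewrite eq_sym addr_eq0 => /eqP.
  by move=> h; rewrite -(proj2 partA) //.
move=> i; rewrite /mu -qfact_sym qfact_rec; apply: eq_bigr => j _.
rewrite qfact_abs -qfact_sym; congr lcoef; lia.
Qed.
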